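(* Let $I=\langle N,M,V\rangle$ be an ordered instance of chores and let $i\in N$ be an agent with an MMS partition $A=\langle A_1,\dots,A_n\rangle$ containing a bundle $B$ with $|B|=2$ and $B\cap\{1,2,\dots,n-1\}=\emptyset$. Then $i$ has an MMS partition $A'=\langle A'_1,\dots,A'_n\rangle$ such that (i) $|A_j|=|A'_j|$ for all $j\in N$, (ii) $\{n,n+1\}$ is one of the bundles of $A'$, and (iii) each chore $g\in\{1,2,\dots,n-1\}$ lies in the bundle with the same index in $A$ and in $A'$.
   Context: An instance of chores $I=\langle N,M,V\rangle$ has agents $N=\{1,\dots,n\}$, chores $M=\{1,\dots,m\}$ and additive valuations $v_i$ with $v_i(\emptyset)=0$, $v_i(S)=\sum_{g\in S}v_i(\{g\})$ and $v_{ij}:=v_i(\{j\})\le 0$. It is ordered if $v_{ij}\le v_{i(j+1)}$ for all $i\in N$ and $1\le j<m$ (so chore $1$ is the worst). An allocation ($n$-partition) is an ordered $n$-tuple of pairwise disjoint, possibly empty subsets of $M$ with union $M$. The maximin share of $i$ is $\mu_i=\max_A\min_j v_i(A_j)$ over all allocations; an MMS partition of $i$ is an allocation $A$ with $v_i(A_j)\ge\mu_i$ for all $j$. *)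

(* Defs.v *)
From HB Require Import structures.
From mathcomp Require Import all_boot all_order all_algebra.
Set Implicit Arguments. Unset Strict Implicit. Unset Printing Implicit Defensive.
Import Order.TTheory GRing.Theory Num.Theory.
Local Open Scope ring_scope.

(* Agents N = {1..n} are represented by 'I_n; chores M = {1..m} by 'I_m,
   where the ordinal g stands for chore number g+1 (see [chore_num]). *)

Definition chore_num (m : nat) (g : 'I_m) : nat := (val g).+1.

Definition bval (R : numDomainType) (n m : nat) (v : 'I_n -> 'I_m -> R)
  (i : 'I_n) (S : {set 'I_m}) : R := \sum_(g in S) v i g.

Definition chores_instance (R : numDomainType) (n m : nat)
  (v : 'I_n -> 'I_m -> R) : Prop := forall i g, v i g <= 0.

Definition ordered_instance (R : numDomainType) (n m : nat)
  (v : 'I_n -> 'I_m -> R) : Prop :=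
  forall (i : 'I_n) (j : 'I_m) (h : ((val j).+1 < m)%N), v i j <= v i (Ordinal h).

Definition is_allocation (n m : nat) (A : 'I_n -> {set 'I_m}) : Prop :=
  (forall j k : 'I_n, j != k -> [disjoint A j & A k]) /\
  (forall g : 'I_m, exists j : 'I_n, g \in A j).

(* mu is the maximin share of agent i:
   mu = max over allocations A of min_j v_i(A_j) *)
Definition is_mms (R : numDomainType) (n m : nat) (v : 'I_n -> 'I_m -> R)
  (i : 'I_n) (mu : R) : Prop :=
  (exists A : 'I_n -> {set 'I_m}, is_allocation A /\ forall j, mu <= bval v i (A j)) /\
  (forall A : 'I_n -> {set 'I_m}, is_allocation A -> exists j, bval v i (A j) <= mu).

Definition mms_partition (R : numDomainType) (n m : nat)
  (v : 'I_n -> 'I_m -> R) (i : 'I_n) (A : 'I_n -> {set 'I_m}) : Prop :=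
  is_allocation A /\
  exists mu, is_mms v i mu /\ forall j, mu <= bval v i (A j).

(* Main.v *)
Require Import Defs.
From HB Require Import structures.
From mathcomp Require Import all_boot all_order all_algebra.
From mathcomp Require Import zify.
From mathcomp Require Import all_fingroup.
Import Order.TTheory GRing.Theory Num.Theory.
Local Open Scope ring_scope.

Set Implicit Arguments.
Lemma vmono (R : realDomainType) (n m : nat) (v : 'I_n -> 'I_m -> R)
  (Hord : ordered_instance v) i (g h : 'I_m) : (g <= h)%N -> v i g <= v i h.
Proof.
move=> gh; have [d Hd] : exists d, (h : nat) = (g + d)%N by exists (h - g)%N; rewrite subnKC.
elim: d h Hd {gh} => [|d IH] h Hd.
  by rewrite (_ : h = g) // ; apply: val_inj => /=; lia.
have Hl : (g + d < m)%N by have := ltn_ord h; lia.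
apply: le_trans (IH (Ordinal Hl) erefl) _.
have Hl2 : ((nat_of_ord (Ordinal Hl)).+1 < m)%N by have := ltn_ord h; rewrite /=; lia.
apply: le_trans (Hord i _ Hl2) _.
by rewrite (_ : Ordinal Hl2 = h) //; apply: val_inj => /=; lia.
Qed.

Lemma bound2 (R : realDomainType) (n m : nat) (v : 'I_n -> 'I_m -> R)
  (Hch : chores_instance v) i (S : {set 'I_m}) k1 k2 :
  k1 != k2 -> k1 \in S -> k2 \in S -> bval v i S <= v i k1 + v i k2.
Proof.
move=> ne h1 h2; rewrite /bval (bigD1 k1) //= (bigD1 k2) /=; last by rewrite h2 eq_sym.
rewrite addrA gerDl; apply: sumr_le0 => g _; exact: Hch.
Qed.

Lemma pigeon (n m : nat) (A : 'I_n -> {set 'I_m}) (HA : is_allocation A)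
  (Hm : (n.+1 <= m)%N) : exists j (k1 k2 : 'I_m), [/\ k1 != k2, (k1 <= n)%N, (k2 <= n)%N,
     k1 \in A j & k2 \in A j].
Proof.
case: HA => _ Hc.
case: n A Hc Hm => [|n] A Hc Hm.
  by have [j _] := Hc (Ordinal Hm); case: j.
pose w (k : 'I_n.+2) : 'I_m := widen_ord Hm k.
pose f (k : 'I_n.+2) : 'I_n.+1 := odflt ord0 [pick j | w k \in A j].
have fP k : w k \in A (f k).
  rewrite /f; case: pickP => [j //|H]; have [j Hj] := Hc (w k); by have := H j; rewrite Hj.
case: (boolP [exists k1, exists k2, (k1 != k2) && (f k1 == f k2)]).
  case/existsP=> k1 /existsP [k2 /andP [ne /eqP e]].
  exists (f k1), (w k1), (w k2); split.
  - by apply: contra ne => /eqP/(congr1 val) /= h; apply/eqP/val_inj.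
  - by rewrite /= -ltnS.
  - by rewrite /= -ltnS.
  - exact: fP.
  - by rewrite e; exact: fP.
move=> /existsPn H.
have inj : injective f.
  move=> k1 k2 e; apply/eqP; apply: contraT => ne.
  by have := H k1; move/existsPn/(_ k2); rewrite ne e eqxx.
by have := leq_card f inj; rewrite !card_ord ltnn.
Qed.

Lemma ord_neq (m : nat) (a b : 'I_m) : a <> b -> (a : nat) <> b.
Proof. by move=> H E; apply: H; apply: val_inj. Qed.

Ltac tonat m := repeat match goal with
  | H : is_true (negb (@eq_op _ _ _)) |- _ => move/eqP: H => H
  | H : @eq _ ?a ?b |- _ => move/(congr1 (@nat_of_ord m)): H => /= H
  | H : ~ (@eq _ ?a ?b) |- _ => move/(@ord_neq m): H => /= H
  end.

Unset Implicit Arguments.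
Theorem lemma15 (R : realDomainType) (n m : nat) (v : 'I_n -> 'I_m -> R)
  (Hch : chores_instance v) (Hord : ordered_instance v)
  (i : 'I_n) (A : 'I_n -> {set 'I_m}) (HA : mms_partition v i A)
  (b : 'I_n) (Hb2 : #|A b| = 2%N)
  (Hblow : forall g : 'I_m, g \in A b -> (n <= chore_num g)%N) :
  exists A' : 'I_n -> {set 'I_m},
    [/\ mms_partition v i A',
        (forall j : 'I_n, #|A j| = #|A' j|),
        (exists k : 'I_n,
            A' k = [set g : 'I_m | (chore_num g == n) || (chore_num g == n.+1)])
      & (forall g : 'I_m, (chore_num g <= n.-1)%N ->
            forall j : 'I_n, (g \in A j) = (g \in A' j))].
Proof.
case: HA => Halloc [mu [Hmu Hge]].
have n0 : (0 < n)%N := leq_ltn_trans (leq0n b) (ltn_ord b).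
have [x [y [xy HAb]]] : exists x y : 'I_m, (x < y)%N /\ A b = [set x; y].
  have /cards2P [x [y [ne E]]] : #|A b| == 2%N by rewrite Hb2.
  case: (ltngtP x y) => h.
  - by exists x, y.
  - by exists y, x; rewrite setUC.
  - by move: ne; rewrite (val_inj h) eqxx.
have Hx : (n <= (x : nat).+1)%N by have := Hblow x; rewrite HAb set21; apply.
have Hy : (n <= (y : nat).+1)%N by have := Hblow y; rewrite HAb set22; apply.
have Hm : (n < m)%N by have := ltn_ord y; lia.
have Hm1 : (n.-1 < m)%N by lia.
pose s : 'I_m := Ordinal Hm1.
pose t : 'I_m := Ordinal Hm.
pose pi : {perm 'I_m} := (tperm x s * tperm y t)%g.
have pix : pi x = s.
  rewrite permM tpermL tpermD //; apply/eqP => E; tonat m; rewrite /= in E; lia.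
have piy : pi y = t.
  rewrite permM (tpermD (x := x)) ?tpermL //; apply/eqP => E; tonat m; rewrite /= in E; lia.
have piup : forall g, g != x -> g != y -> (g <= pi g)%N.
  move=> g gx gy; rewrite permM; case: (tpermP x s g) => [e|e|n1 n2]; case: (tpermP y t) => [e'|e'|n1' n2'];
  tonat m; simpl in *; lia.
have pifix : forall g : 'I_m, (g < n.-1)%N -> pi g = g.
  move=> g hg; rewrite permM !tpermD //; apply/eqP => E; tonat m; rewrite /= in E; lia.
exists (fun j => pi @: A j); split.
- split.
  + split.
    * move=> j k ne; apply/pred0P => z /=; apply/negbTE/negP.
      move=> /andP[/imsetP[a Ha ->] /imsetP[c Hc /perm_inj e]].
      by subst c; rewrite (disjointFr (Halloc.1 j k ne) Ha) in Hc.
    * move=> g; have [j Hj] := Halloc.2 (pi^-1 g)%g; exists j.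
      by rewrite -[g](permKV pi) imset_f.
  + exists mu; split=> // j.
    rewrite /bval big_imset /=; last by move=> ? ? _ _; apply: perm_inj.
    case: (j =P b) => [->|ne].
    * have xny : x \notin [set y] by rewrite inE; apply/eqP => E; move: xy; rewrite E ltnn.
      rewrite HAb big_setU1 //= big_set1.
      rewrite pix piy.
      have [j' [k1 [k2 [ne12 hk1 hk2 in1 in2]]]] := pigeon Halloc Hm.
      apply: le_trans (Hge j') _; apply: le_trans (@bound2 _ _ _ _ Hch i (A j') k1 k2 ne12 in1 in2) _.
      case: (ltngtP k1 k2) => h.
      - by apply: lerD; apply: vmono => //=; lia.
      - by rewrite addrC; apply: lerD; apply: vmono => //=; lia.
      - by move: ne12; rewrite (val_inj h) eqxx.
    * apply: le_trans (Hge j) _; rewrite /bval; apply: ler_sum => g Hg; apply: vmono => //.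
      have ngb : g \notin A b.
        apply/negP => gb; by rewrite (disjointFr (Halloc.1 j b (introN eqP ne)) Hg) in gb.
      apply: piup; apply: contra ngb => /eqP ->; by rewrite HAb ?set21 ?set22.
- by move=> j; rewrite card_imset //; apply: perm_inj.
- exists b; rewrite HAb imsetU1 imset_set1 pix piy; apply/setP => g.
  rewrite !inE /chore_num -!val_eqE /= eqSS.
  have E : ((g : nat).+1 == n) = ((g : nat) == n.-1) by rewrite -{1}(prednK n0) eqSS.
  by rewrite E.
- move=> g hg j; rewrite /chore_num in hg.
  have hg2 : (g < n.-1)%N := hg.
  by rewrite -{2}(pifix g hg2) mem_imset //; apply: perm_inj.
Qed.
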